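(* Let $A\in\mathbb{C}^{n\times n}$ be Hermitian, $f(x)=\frac12\|xx^*-A\|_F^2$ with $\nabla f(x)=2(xx^*-A)x$, and let $x_0\in\mathbb{C}^{n\times p}_*$. Consider two iterations started from the same point and using the same step sizes $\alpha_k>0$: (i) (Euclidean nonlinear CG) $\eta_0=-\nabla f(x_0)$, $x_{k+1}=x_k+\alpha_k\eta_k$, $\eta_{k+1}=-\nabla f(x_{k+1})+\beta_{k+1}\eta_k$ with either $\beta_{k+1}=\max\!\big(0,\frac{\langle\nabla f(x_{k+1}),\nabla f(x_{k+1})-\nabla f(x_k)\rangle}{\langle\nabla f(x_k),\nabla f(x_k)\rangle}\big)$ (Polak–Ribière$_+$) or $\beta_{k+1}=\frac{\langle\nabla f(x_{k+1}),\nabla f(x_{k+1})\rangle}{\langle\nabla f(x_k),\nabla f(x_k)\rangle}$ (Fletcher–Reeves); (ii) (lifted Riemannian CG on $\mathbb{C}^{n\times p}_*/\mathcal O_p$) $y_0=x_0$, $\zeta_0=-\nabla f(y_0)$, $y_{k+1}=y_k+\alpha_k\zeta_k$, $\zeta_{k+1}=-\nabla f(y_{k+1})+\gamma_{k+1}P^{\mathcal H}_{y_{k+1}}(\zeta_k)$, with either $\gamma_{k+1}=\max\!\big(0,\frac{\langle\nabla f(y_{k+1}),\nabla f(y_{k+1})-P^{\mathcal H}_{y_{k+1}}(\nabla f(y_k))\rangle}{\langle\nabla f(y_k),\nabla f(y_k)\rangle}\big)$ (PR$_+$) or $\gamma_{k+1}=\frac{\langle\nabla f(y_{k+1}),\nabla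 f(y_{k+1})\rangle}{\langle\nabla f(y_k),\nabla f(y_k)\rangle}$ (FR), the same rule being used in (i) and (ii). Assume all iterates lie in $\mathbb{C}^{n\times p}_*$ and all denominators are nonzero. Then $y_k=x_k$ and $\zeta_k=\eta_k$ for all $k\ge0$.
   Context: $\mathbb{C}^{n\times p}_*=\{X\in\mathbb{C}^{n\times p}:\operatorname{rank}X=p\}$; $\mathcal O_p$ is the group of $p\times p$ unitary matrices acting by right multiplication. $\mathbb{C}^{n\times p}$ is a real vector space with inner product $\langle U,V\rangle=\Re\operatorname{tr}(U^*V)$. For $y\in\mathbb{C}^{n\times p}_*$ the horizontal space is $\mathcal H_y=\{z: y^*z=z^*y\}$, and the orthogonal projection onto it is $P^{\mathcal H}_y(z)=z-y\Omega$ where $\Omega$ is the unique solution of $\Omega\,y^*y+y^*y\,\Omega=y^*z-z^*y$. *)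

(* Defs.v *)
(* The complex field is abstracted as an arbitrary
   numClosedFieldType C (e.g. complex R for R : realType, or algC). *)
From HB Require Import structures.
From mathcomp Require Import all_boot all_order all_algebra.
From Stdlib Require Import ClassicalEpsilon.
Set Implicit Arguments. Unset Strict Implicit. Unset Printing Implicit Defensive.
Import Order.TTheory GRing.Theory Num.Theory.
Local Open Scope ring_scope.

Section Defs.
Variable C : numClosedFieldType.

Definition mxadj m n (X : 'M[C]_(m, n)) : 'M[C]_(n, m) := (map_mx Num.conj X)^T.

Definition ip m n (U V : 'M[C]_(m, n)) : C := 'Re (\tr (mxadj U *m V)).

Definition gradf n p (A : 'M[C]_n) (x : 'M[C]_(n, p)) : 'M[C]_(n, p) :=
  (2%:R : C) *: ((x *m mxadj x - A) *m x).

(* Omega : the (unique, for full-rank y) solution of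
   Om (y^* y) + (y^* y) Om = y^* z - z^* y *)
Definition Omega n p (y z : 'M[C]_(n, p)) : 'M[C]_p :=
  epsilon (inhabits 0) (fun Om : 'M[C]_p =>
    Om *m (mxadj y *m y) + (mxadj y *m y) *m Om = mxadj y *m z - mxadj z *m y).

Definition projH n p (y z : 'M[C]_(n, p)) : 'M[C]_(n, p) := z - y *m Omega y z.

Inductive cg_rule := PRplus | FR.

Definition beta_coef n p (r : cg_rule) (g1 g0 : 'M[C]_(n, p)) : C :=
  match r with
  | PRplus => Num.max 0 (ip g1 (g1 - g0) / ip g0 g0)
  | FR => ip g1 g1 / ip g0 g0
  end.

Definition gamma_coef n p (r : cg_rule) (y1 g1 g0 : 'M[C]_(n, p)) : C :=
  match r with
  | PRplus => Num.max 0 (ip g1 (g1 - projH y1 g0) / ip g0 g0)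
  | FR => ip g1 g1 / ip g0 g0
  end.
End Defs.

(* Main.v *)
Require Import Defs.
From HB Require Import structures.
From mathcomp Require Import all_boot all_order all_algebra.
From Stdlib Require Import ClassicalEpsilon.
Import Order.TTheory GRing.Theory Num.Theory.
Local Open Scope ring_scope.

Set Implicit Arguments. Unset Strict Implicit.
Section L.
Variable C : numClosedFieldType.

Lemma adjK m n (X : 'M[C]_(m,n)) : mxadj (mxadj X) = X.
Proof. by apply/matrixP=> i j; rewrite !mxE conjCK. Qed.

Lemma adjM m n q (X : 'M[C]_(m,n)) (Y : 'M[C]_(n,q)) :
  mxadj (X *m Y) = mxadj Y *m mxadj X.
Proof. by rewrite /mxadj map_mxM trmx_mul. Qed.

Lemma adjD m n (X Y : 'M[C]_(m,n)) : mxadj (X + Y) = mxadj X + mxadj Y.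
Proof. by apply/matrixP=> i j; rewrite !mxE rmorphD. Qed.

Lemma adjN m n (X : 'M[C]_(m,n)) : mxadj (- X) = - mxadj X.
Proof. by apply/matrixP=> i j; rewrite !mxE rmorphN. Qed.

Lemma adjB m n (X Y : 'M[C]_(m,n)) : mxadj (X - Y) = mxadj X - mxadj Y.
Proof. by rewrite adjD adjN. Qed.

Lemma adjZ m n a (X : 'M[C]_(m,n)) : mxadj (a *: X) = a^* *: mxadj X.
Proof. by apply/matrixP=> i j; rewrite !mxE rmorphM. Qed.

Lemma adj0 m n : mxadj (0 : 'M[C]_(m,n)) = 0.
Proof. by apply/matrixP=> i j; rewrite !mxE rmorph0. Qed.

Lemma tr_adj n (X : 'M[C]_n) : \tr (mxadj X) = (\tr X)^*.
Proof. by rewrite /mxadj mxtrace_tr /mxtrace rmorph_sum; apply: eq_bigr => i _; rewrite mxE. Qed.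

Lemma frob_ge0 m n (X : 'M[C]_(m,n)) : 0 <= \tr (mxadj X *m X).
Proof.
rewrite /mxtrace; apply: sumr_ge0 => j _; rewrite mxE; apply: sumr_ge0 => i _.
by rewrite !mxE -normCKC exprn_ge0.
Qed.

Lemma frob_eq0 m n (X : 'M[C]_(m,n)) : \tr (mxadj X *m X) = 0 -> X = 0.
Proof.
rewrite /mxtrace => /eqP; rewrite psumr_eq0; last first.
  move=> j _; rewrite mxE; apply: sumr_ge0 => i _.
  by rewrite !mxE -normCKC exprn_ge0.
move=> /allP H; apply/matrixP=> i j; rewrite mxE.
have := H j (mem_index_enum _); rewrite mxE psumr_eq0; last first.
  by move=> k _; rewrite !mxE -normCKC exprn_ge0.
move=> /allP /(_ i (mem_index_enum _)); rewrite !mxE -normCKC.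
by rewrite expf_eq0 /= normr_eq0 => /eqP.
Qed.

Lemma key n p (y : 'M[C]_(n,p)) (K : 'M[C]_p) :
  K *m (mxadj y *m y) + (mxadj y *m y) *m K = 0 -> y *m K = 0.
Proof.
set M := mxadj y *m y => HK.
have MH : mxadj M = M by rewrite /M adjM adjK.
have KM : K *m M = - (M *m K) by apply/eqP; rewrite -subr_eq0 opprK HK.
have E1 : \tr (mxadj (M *m K) *m (M *m K)) = 0.
  have T1 : \tr (mxadj (y *m K *m mxadj y) *m (y *m K *m mxadj y))
          = - \tr (mxadj (M *m K) *m (M *m K)).
    rewrite !adjM adjK -!mulmxA mxtrace_mulC.
    have -> : mxadj K *m (mxadj y *m (y *m (K *m mxadj y))) *m y
            = mxadj K *m (M *m (K *m M)) by rewrite /M !mulmxA.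
    by rewrite KM mulmxN mulmxN linearN /= !mulmxA.
  have h1 := frob_ge0 (M *m K).
  have h2 := frob_ge0 (y *m K *m mxadj y).
  rewrite T1 oppr_ge0 in h2.
  by apply/eqP; rewrite eq_le h1 h2.
have MK0 := frob_eq0 E1.
apply: frob_eq0; rewrite adjM -mulmxA (mulmxA (mxadj y)) -/M MK0.
by rewrite mulmx0 mxtrace0.
Qed.

Definition Lop p (M K : 'M[C]_p) := K *m M + M *m K.

Lemma Lop_surj n p (y : 'M[C]_(n,p)) (S : 'M[C]_p) : \rank y = p ->
  exists K, Lop (mxadj y *m y) K = S.
Proof.
move=> ry; set M := mxadj y *m y.
have [B By] : exists B : 'M[C]_(p,n), B *m y = 1%:M.
  by apply/row_fullP; rewrite /row_full ry.
have inj K : Lop M K = 0 -> K = 0.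
  move=> /key HK; by rewrite -(mul1mx K) -By -mulmxA HK mulmx0.
set N := lin_mx (mulmxr M) + lin_mx (mulmx M).
have PN K : mxvec K *m N = mxvec (Lop M K).
  by rewrite mulmxDr !mul_vec_lin /= /Lop linearD.
have NU : N \in unitmx.
  rewrite -row_free_unit -kermx_eq0; apply/eqP/row_matrixP => i.
  rewrite row0.
  have H0 : row i (kermx N) *m N = 0 by rewrite -row_mul mulmx_ker row0.
  rewrite -(vec_mxK (row i (kermx N))) PN in H0.
  have : Lop M (vec_mx (row i (kermx N))) = 0.
    by apply: (can_inj (@mxvecK _ _ _)); rewrite H0 linear0.
  by move=> /inj /(congr1 mxvec); rewrite vec_mxK linear0.
exists (vec_mx (mxvec S *m invmx N)).
apply: (can_inj (@mxvecK _ _ _)).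
by rewrite -PN vec_mxK mulmxKV.
Qed.

Lemma Omega_spec n p (y z : 'M[C]_(n,p)) : \rank y = p ->
  Lop (mxadj y *m y) (Omega y z) = mxadj y *m z - mxadj z *m y.
Proof.
move=> ry; rewrite /Omega.
have [K HK] := Lop_surj (mxadj y *m z - mxadj z *m y) ry.
exact: (epsilon_spec (inhabits 0) (fun Om : 'M[C]_p =>
    Om *m (mxadj y *m y) + (mxadj y *m y) *m Om = mxadj y *m z - mxadj z *m y)
   (ex_intro _ K HK)).
Qed.

Definition hz n p (y z : 'M[C]_(n,p)) := mxadj y *m z = mxadj z *m y.

Lemma projH_hz n p (y z : 'M[C]_(n,p)) : \rank y = p -> hz y z -> projH y z = z.
Proof.
move=> ry H; rewrite /projH.
have := Omega_spec z ry; rewrite H subrr => /key ->.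
by rewrite subr0.
Qed.

Lemma ip_vert n p (y g z : 'M[C]_(n,p)) : \rank y = p -> hz y g ->
  ip g (y *m Omega y z) = 0.
Proof.
move=> ry H; set Om := Omega y z.
have HO := Omega_spec z ry; rewrite -/Om in HO.
have HO' : Lop (mxadj y *m y) (Om + mxadj Om) = 0.
  move: HO; rewrite /Lop => HO.
  have := congr1 (@mxadj _ _ _) HO.
  rewrite adjB adjD !adjM !adjK => HO2.
  rewrite mulmxDl mulmxDr addrACA HO (addrC (mxadj Om *m _)) HO2.
  by rewrite addrC addrA subrK subrr.
have /key Y := HO'.
rewrite /ip ReE.
have -> : (\tr (mxadj g *m (y *m Om)))^* = \tr (mxadj g *m (y *m mxadj Om)).
  rewrite -tr_adj !adjM adjK -mulmxA.
  by rewrite /hz in H; rewrite H mxtrace_mulC mulmxA.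
by rewrite -mxtraceD -mulmxDr -mulmxDr Y mulmx0 mxtrace0 mul0r.
Qed.

Lemma ipD m n (g a b : 'M[C]_(m,n)) : ip g (a + b) = ip g a + ip g b.
Proof. by rewrite /ip mulmxDr mxtraceD raddfD. Qed.

Lemma hz_grad n p (A : 'M[C]_n) (y : 'M[C]_(n,p)) : mxadj A = A -> hz y (gradf A y).
Proof.
move=> hA; rewrite /hz /gradf adjZ adjM adjB adjM adjK hA.
rewrite (_ : (2%:R : C)^* = 2%:R); last by rewrite rmorph_nat.
by rewrite -scalemxAr -scalemxAl mulmxA.
Qed.

Lemma hz_step n p (y z : 'M[C]_(n,p)) a : a^* = a -> hz y z -> hz (y + a *: z) z.
Proof.
move=> ha; rewrite /hz adjD adjZ ha mulmxDl mulmxDr => E.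
by congr (_ + _); rewrite -?scalemxAl -?scalemxAr.
Qed.

Lemma hz_comb n p (y g z : 'M[C]_(n,p)) c : c^* = c -> hz y g -> hz y z ->
  hz y (- g + c *: z).
Proof.
move=> hc; rewrite /hz adjD adjN adjZ hc mulmxDr mulmxDl mulmxN mulNmx => E1 E2.
by congr (_ + _); [congr (- _) | rewrite -scalemxAl -scalemxAr; congr (_ *: _)].
Qed.

Lemma hz_opp n p (y g : 'M[C]_(n,p)) : hz y g -> hz y (- g).
Proof. by rewrite /hz adjN mulmxN mulNmx => E; congr (- _). Qed.

Lemma beta_real n p r (g1 g0 : 'M[C]_(n,p)) : (beta_coef r g1 g0)^* = beta_coef r g1 g0.
Proof.
apply: conj_Creal; case: r => /=; last by rewrite rpred_div // Creal_Re.
have hr : ip g1 (g1 - g0) / ip g0 g0 \is Num.real by rewrite rpred_div // Creal_Re.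
by rewrite /Num.max; case: ifP.
Qed.

Lemma gamma_beta n p r (y g1 g0 : 'M[C]_(n,p)) : \rank y = p -> hz y g1 ->
  gamma_coef r y g1 g0 = beta_coef r g1 g0.
Proof.
move=> ry H; case: r => //=.
rewrite /projH opprB addrCA [ip g1 (_ + (g1 - g0))]ipD (ip_vert _ ry H) add0r.
by [].
Qed.
End L.

Theorem theorem3p2 (C : numClosedFieldType) (n p : nat) (A : 'M[C]_n)
  (rule : cg_rule) (alpha : nat -> C)
  (x eta y zeta : nat -> 'M[C]_(n, p)) :
  mxadj A = A ->
  (forall k, 0 < alpha k) ->
  (* (i) Euclidean nonlinear CG *)
  eta 0%N = - gradf A (x 0%N) ->
  (forall k, x k.+1 = x k + alpha k *: eta k) ->
  (forall k, eta k.+1 = - gradf A (x k.+1)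
       + beta_coef rule (gradf A (x k.+1)) (gradf A (x k)) *: eta k) ->
  (* (ii) lifted Riemannian CG *)
  y 0%N = x 0%N ->
  zeta 0%N = - gradf A (y 0%N) ->
  (forall k, y k.+1 = y k + alpha k *: zeta k) ->
  (forall k, zeta k.+1 = - gradf A (y k.+1)
       + gamma_coef rule (y k.+1) (gradf A (y k.+1)) (gradf A (y k))
           *: projH (y k.+1) (zeta k)) ->
  (* all iterates have full rank p, all denominators nonzero *)
  (forall k, \rank (x k) = p) ->
  (forall k, \rank (y k) = p) ->
  (forall k, ip (gradf A (x k)) (gradf A (x k)) != 0) ->
  (forall k, ip (gradf A (y k)) (gradf A (y k)) != 0) ->
  forall k, y k = x k /\ zeta k = eta k.
Proof.
move=> hA apos eta0 xS etaS y0 zeta0 yS zetaS rx ry _ _.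
suff H : forall k, [/\ y k = x k, zeta k = eta k & hz (y k) (zeta k)].
  by move=> k; case: (H k).
elim=> [|k [ey ez hk]].
  split=> //; first by rewrite zeta0 y0 eta0.
  by rewrite zeta0; apply/hz_opp/hz_grad.
have ar : (alpha k)^* = alpha k by apply: conj_Creal; apply: gtr0_real.
have hk1 : hz (y k.+1) (zeta k) by rewrite yS; apply: hz_step.
have ey1 : y k.+1 = x k.+1 by rewrite yS xS ey ez.
split=> //.
  rewrite zetaS etaS projH_hz // gamma_beta //; last exact: hz_grad.
  by rewrite ey1 ey ez.
rewrite zetaS projH_hz // gamma_beta //; last exact: hz_grad.
apply: hz_comb => //; [exact: beta_real | exact: hz_grad].
Qed.
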